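(* Let $m$ and $d$ be positive integers with $m\ge3$. There exist a positive integer $N=N(m,d)$ and a block $B=(b_1,\ldots,b_N)\in\{0,1,\ldots,m-1\}^N$ such that for any real polynomial $P$ of degree $d$ and any sequence $(\eta_n)_n$ of real numbers with $|\eta_n|\le 1/20$ for all $n$, there exists $n\in[1,N]$ such that \[\lfloor P(n)+\eta_n\rfloor\not\equiv b_n\pmod m.\] *)

(* Defs.v *)
From HB Require Import structures.
From mathcomp Require Export all_boot all_order all_algebra.
From mathcomp Require Export Rstruct.
Set Implicit Arguments. Unset Strict Implicit. Unset Printing Implicit Defensive.
Export Order.TTheory GRing.Theory Num.Theory.

Notation Real := Rdefinitions.R.

(* Main.v *)
Require Import Defs.
From mathcomp Require Import zify ring lra.

Lemma sq_le_pow t : (4 <= t -> t * t <= 2 ^ t)%N.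
Proof.
elim: t => // t IH; rewrite leq_eqVlt => /orP [/eqP <- //|].
rewrite ltnS => ht; have H := IH ht; rewrite expnS; move: H; set X := (2 ^ t)%N => H; nia.
Qed.

Lemma pow_beats a b : exists t, (a * t + b < 2 ^ t)%N.
Proof.
exists (a + b + 4)%N. have := @sq_le_pow (a + b + 4) ltac:(lia).
set X := (2 ^ _)%N. nia.
Qed.

Lemma count_ineq m d : (3 <= m)%N -> exists N M : nat,
  [/\ (0 < N)%N, (d.+1 <= N)%N, (4 * d.+1 * N ^ d <= M)%N, (0 < M)%N &
      ((m * M) ^ d.+1 * 2 ^ N < m ^ N)%N].
Proof.
move=> hm.
have [t' Ht] := pow_beats (d * d.+1) ((3 * d + 5) * d.+1).
set u := (2 ^ t')%N.
have Hu : (0 < u)%N by rewrite expn_gt0.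
set N := (4 * u)%N.
set c := (d + 3 + t'.+2 * d)%N.
have HN : N = (2 ^ t'.+2)%N by rewrite /N /u !expnS; lia.
exists N, (2 ^ c)%N.
have Hdu : (d.+1 < u)%N by apply: leq_trans Ht; nia.
split.
- lia.
- lia.
- have hd : (d.+1 <= 2 ^ d)%N by apply: ltn_expl.
  have Ec : (2 ^ c = 2 ^ d * 8 * N ^ d)%N.
    by rewrite HN -expnM /c !expnD.
  rewrite Ec; move: hd; set X := (2 ^ d)%N; set Y := (N ^ d)%N => hd. nia.
- by rewrite expn_gt0.
-
  have E1 : ((m * 2 ^ c) ^ d.+1 = m ^ d.+1 * (2 ^ c) ^ d.+1)%N by rewrite expnMn.
  have E2 : (m ^ N = m ^ d.+1 * m ^ (N - d.+1))%N by rewrite -expnD subnKC //; lia.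
  rewrite E1 E2 -mulnA ltn_pmul2l ?expn_gt0 ?(leq_trans _ hm) //.
  have H3 : (3 ^ (N - d.+1) <= m ^ (N - d.+1))%N.
    by case: (N - d.+1)%N => [//|k]; rewrite leq_exp2r.
  apply: leq_trans H3.
  suff H : (((2 ^ c) ^ d.+1 * 2 ^ N * 3 ^ d.+1)%N < (3 ^ (N - d.+1) * 3 ^ d.+1)%N)%N.
    by rewrite ltn_pmul2r ?expn_gt0 in H.
  rewrite -expnD subnK; last by lia.
  have H81 : (2 ^ N * 2 ^ (2 * u) <= 3 ^ N)%N.
    rewrite -expnD /N.
    have -> : (4 * u + 2 * u = 6 * u)%N by lia.
    rewrite !expnM leq_exp2r //.
  apply: leq_trans H81.
  have -> : ((2 ^ c) ^ d.+1 * 2 ^ N * 3 ^ d.+1 = 2 ^ N * ((2 ^ c) ^ d.+1 * 3 ^ d.+1))%N by ring.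
  rewrite ltn_pmul2l ?expn_gt0 //.
  have H34 : (3 ^ d.+1 <= 4 ^ d.+1)%N by rewrite leq_exp2r.
  apply: (@leq_ltn_trans ((2 ^ c) ^ d.+1 * 4 ^ d.+1)%N); first by rewrite leq_mul2l H34 orbT.
  rewrite -expnM (_ : 4 = 2 ^ 2)%N // -expnM -expnD ltn_exp2l //.
  rewrite /c. have : (u <= 2 * u)%N by lia. nia.
Qed.
Local Open Scope ring_scope.

Lemma modr_bounds (c k : Real) : 0 < k ->
  0 <= c - (Num.floor (c / k))%:~R * k < k.
Proof.
move=> hk.
have Ec : c = (c / k) * k by rewrite divfK // gt_eqF.
have h1 := floor_le (c / k).
have h2 := floorD1_gt (c / k).
rewrite intrD in h2.
set y := c / k in Ec h1 h2 *; set f := (Num.floor y)%:~R in h1 h2 *.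
rewrite [in X in X - _]Ec.
apply/andP; split; nra.
Qed.

Definition approx (d M K : nat) (g : {ffun 'I_d.+1 -> 'I_K}) (n : nat) : Real :=
  \sum_(j < d.+1) ((g j : nat)%:R / M%:R) * (n%:R) ^+ j.
Arguments approx {d} M {K} g n.

Lemma floor_two (x A : Real) : `|x - A| < 1/2 ->
  exists bit : bool, Num.floor x = Num.floor (A - 1/2) + bit%:Z.
Proof.
move=> h.
set L := Num.floor (A - 1/2).
have hL1 := floor_le (A - 1/2).
have hL2 := floorD1_gt (A - 1/2).
rewrite -/L intrD in hL1 hL2.
have h1 : L <= Num.floor x.
  rewrite floor_ge_int; move: h; rewrite ltr_norml; lra.
have h2 : Num.floor x < L + 2.
  rewrite floor_lt_int intrD; move: h; rewrite ltr_norml; lra.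
exists (Num.floor x != L).
case: eqP => [-> |ne]; first by rewrite addr0.
lia.
Qed.

Lemma expn_mono_base n N j : (n <= N -> n ^ j <= N ^ j)%N.
Proof. move=> h; elim: j => // j IH; rewrite !expnS leq_mul //. Qed.

Lemma decomp (m d M N : nat) (P : {poly Real}) (eta : nat -> Real) :
  (0 < m)%N -> (0 < M)%N -> (4 * d.+1 * N ^ d <= M)%N -> size P = d.+1 ->
  (forall n, `|eta n| <= 1 / 20) ->
  exists g : {ffun 'I_d.+1 -> 'I_(m * M)}, forall n, (1 <= n)%N -> (n <= N)%N ->
  exists bit : bool, ((Num.floor (P.[n%:R] + eta n)) %% m%:Z)%Z =
     ((Num.floor (approx M g n - 1/2) + bit%:Z) %% m%:Z)%Z.
Proof.
move=> hm hM hMN hP heta.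
have hm' : 0 < (m%:R : Real) by rewrite ltr0n.
have hM' : 0 < (M%:R : Real) by rewrite ltr0n.
pose q := fun j : 'I_d.+1 => Num.floor (P`_j / m%:R).
pose r := fun j : 'I_d.+1 => P`_j - (q j)%:~R * m%:R.
have hr : forall j, 0 <= r j < m%:R by move=> j; exact: modr_bounds.
pose h := fun j => Num.floor (r j * M%:R).
have hh0 : forall j, 0 <= h j.
  move=> j; rewrite /h floor_ge0 mulr_ge0 //; by case/andP: (hr j).
have hhr : forall j, 0 <= r j * M%:R - (h j)%:~R < 1.
  move=> j; have := floor_le (r j * M%:R); have := floorD1_gt (r j * M%:R).
  rewrite intrD -/(h j); move=> a b; apply/andP; split; lra.
have hhM : forall j, (`|h j|%N < m * M)%N.
  move=> j; rewrite -ltz_nat gez0_abs // /h floor_lt_int PoszM intrM.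
  case/andP: (hr j) => _ h2.
  by rewrite ltr_pM2r.
have Eh : forall j, ((`|h j|%N)%:R : Real) = (h j)%:~R.
  by move=> j; rewrite -[in RHS](gez0_abs (hh0 j)).
exists [ffun j => Ordinal (hhM j)].
move=> n hn1 hnN.
pose S := \sum_(j < d.+1) r j * n%:R ^+ j.
pose W := \sum_(j < d.+1) (q j)%:~R * (n%:R : Real) ^+ j.
have EP : P.[n%:R] = S + (m%:Z * Num.floor W)%:~R.
  have Wi : W \is a Num.int.
    by apply: rpred_sum => j _; rewrite rpredM ?rpredX ?intr_int ?natr_int.
  rewrite intrM floorK // (horner_coef_wide _ (eq_leq hP)) /S /W.
  rewrite mulr_sumr -big_split /=; apply: eq_bigr => j _.
  rewrite /r; ring.
rewrite EP addrAC floorDrz ?intr_int // intrKfloor mulrC.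
rewrite (addrC (Num.floor (S + eta n))) modzMDl.
have hA : `|S - approx M [ffun j => Ordinal (hhM j)] n| <= 1/4.
  have -> : S - approx M [ffun j => Ordinal (hhM j)] n =
     \sum_(j < d.+1) (r j - (h j)%:~R / M%:R) * n%:R ^+ j.
    rewrite /approx -sumrB; apply: eq_bigr => j _; rewrite ffunE /= Eh; ring.
  apply: le_trans (ler_norm_sum _ _ _) _.
  apply: (@le_trans _ _ (\sum_(j < d.+1) (1 / M%:R * N%:R ^+ d))).
    apply: ler_sum => j _; rewrite normrM.
    have hj : `|r j - (h j)%:~R / M%:R| <= 1 / M%:R.
      have -> : r j - (h j)%:~R / M%:R = (r j * M%:R - (h j)%:~R) / M%:R.
        by field; rewrite gt_eqF.
      rewrite normrM ger0_norm; last by case/andP: (hhr j).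
      rewrite ger0_norm ?invr_ge0 ?ler0n // ler_pM2r ?invr_gt0 //.
      by case/andP: (hhr j) => _ /ltW.
    apply: ler_pM => //; rewrite ?normr_ge0 //.
    rewrite normrX ger0_norm ?ler0n // -!natrX ler_nat.
    apply: leq_trans (@expn_mono_base n N j hnN) _.
    apply: leq_pexp2l; [lia | by rewrite -ltnS ltn_ord].
  rewrite sumr_const card_ord.
  have hc : ((4 * d.+1 * N ^ d)%:R : Real) <= M%:R by rewrite ler_nat.
  rewrite !natrM natrX in hc.
  have -> : ((1 / M%:R * N%:R ^+ d) *+ d.+1 : Real) = (d.+1%:R * N%:R ^+ d) / M%:R.
    by rewrite -mulr_natl; field; rewrite gt_eqF.
  rewrite ler_pdivrMr //.
  lra.
have := floor_two (S + eta n) (approx M [ffun j => Ordinal (hhM j)] n).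
case.
  have := heta n; move: hA.
  set A := approx _ _ _; move=> hA he.
  have -> : S + eta n - A = (S - A) + eta n by ring.
  apply: le_lt_trans (ler_normD _ _) _. lra.
move=> bit ->; by exists bit.
Qed.

Lemma toI_proof (m : nat) (hm : (0 < m)%N) (z : int) : (`|(z %% m%:Z)%Z|%N < m)%N.
Proof.
rewrite -ltz_nat gez0_abs ?modz_ge0 ?ltz_pmod //; last by rewrite eqz_nat -lt0n.
Qed.

Definition toI (m : nat) (hm : (0 < m)%N) (z : int) : 'I_m := Ordinal (@toI_proof m hm z).
Arguments toI {m}.

Lemma toIE (m : nat) (hm : (0 < m)%N) (z : int) : ((toI hm z : nat)%:Z = (z %% m%:Z)%Z).
Proof. by rewrite /= gez0_abs // modz_ge0 // eqz_nat -lt0n. Qed.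

Theorem theorem6 (m d : nat) (hm : (3 <= m)%N) (hd : (0 < d)%N) :
  exists N : nat, (0 < N)%N /\
  exists b : nat -> 'I_m,
    forall (P : {poly Real}) (eta : nat -> Real),
      size P = d.+1 ->
      (forall n : nat, `|eta n| <= 1 / 20) ->
      exists n : nat, [/\ (1 <= n)%N, (n <= N)%N &
        ((Num.floor (P.[n%:R] + eta n)) %% (m%:Z))%Z != (nat_of_ord (b n))%:Z].
Proof.
have hm0 : (0 < m)%N by lia.
have [N [M [hN0 hdN hMN hM0 hineq]]] := count_ineq m d hm.
exists N; split => //.
pose pat := fun x : {ffun 'I_d.+1 -> 'I_(m * M)} * {ffun 'I_N -> bool} =>
  [ffun i : 'I_N => toI hm0 (Num.floor (approx M x.1 i.+1 - 1/2) + (x.2 i)%:Z)].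
have [p hp] : exists p, p \notin codom pat.
  apply/existsP; rewrite -negb_forall; apply/negP => /forallP H.
  have : (#|{ffun 'I_N -> 'I_m}| <= #|codom pat|)%N.
    by apply: subset_leq_card; apply/subsetP => q _; exact: H q.
  move/leq_trans/(_ (card_size _)); rewrite size_codom card_prod !card_ffun !card_ord card_bool.
  by rewrite leqNgt hineq.
pose b := fun n : nat => match (insub n.-1 : option 'I_N) with Some i => p i | None => toI hm0 0 end.
exists b => P eta hP heta.
have [g hg] := @decomp m d M N P eta hm0 hM0 hMN hP heta.
pose L := fun i : 'I_N => Num.floor (approx M g i.+1 - 1/2).
pose F := fun i : 'I_N => ((Num.floor (P.[i.+1%:R] + eta i.+1)) %% (m%:Z))%Z.
pose bits := [ffun i : 'I_N => F i != ((L i) %% m%:Z)%Z].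
have hbits : forall i, F i = ((L i + (bits i)%:Z) %% m%:Z)%Z.
  move=> i; have [bit hbit] := hg i.+1 isT (ltn_ord i).
  rewrite /bits ffunE; case: eqP => [-> | ne]; first by rewrite addr0.
  case: bit hbit => // hbit; exfalso; apply: ne; by rewrite /F hbit addr0.
case: (boolP [exists i : 'I_N, F i != (b i.+1)%:Z]) => [/existsP [i hi] | H].
  by exists i.+1; split.
exfalso; move: hp; apply/negP; rewrite negbK.
apply/codomP; exists (g, bits); apply/ffunP => i; rewrite ffunE /=.
apply: val_inj => /=.
move/existsPn: H => /(_ i); rewrite negbK => /eqP.
rewrite hbits -toIE => /eqP; rewrite eqz_nat => /eqP ->.
rewrite /b /= insubT //.
by move=> Hi; congr (p _); apply: val_inj.
Qed.
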